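(* Let $f:H\to\mathbb{R}\cup\{+\infty\}$ be proper and lower semicontinuous, and let $(x^k)$ satisfy $\mathbf{H}_1$, $\mathbf{H}_2$, $\mathbf{H}_3$ with $\varepsilon_k=0$ for all $k$. Suppose $(x^k)$ $f$-converges to a point $x^*$ at which $f$ has the K\L{} property with desingularizing function $\varphi$. Set $\tilde\varphi(t):=\max\{\varphi(t),\sqrt t\}$. Then $\|x^*-x^k\|=O\big(\tilde\varphi(f(x^{k-1})-f(x^* ))\big)$ as $k\to\infty$.
   Context: Subdifferential $\partial f$ (limiting Fréchet subdifferential), lazy slope $\|\partial f(x)\|_-=\inf_{p\in\partial f(x)}\|p\|$ ($+\infty$ if $\partial f(x)=\emptyset$), $f$-convergence: $x^k\to x$ strongly and $f(x^k)\to f(x)$. A desingularizing function is a continuous concave $\varphi:[0,\eta[\to[0,+\infty[$ with $\varphi(0)=0$, $C^1$ on $]0,\eta[$ with $\varphi'>0$. $f$ has the K\L{} property at $x^*$ with desingularizing $\varphi$ if there is $\delta>0$ with $\varphi'(f(x)-f(x^* ))\|\partial f(x)\|_-\ge1$ for all $x$ with $\|x-x^*\|<\delta$ and $f(x^* )<f(x)<f(x^* )+\eta$. $\mathbf{H}_1$: $f(x^{k+1})+a_k\|x^{k+1}-x^k\|^2\le f(x^k)$, $a_k>0$. $\mathbf{H}_2$: $b_{k+1}\|\partial f(x^{k+1})\|_-\le\|x^{k+1}-x^k\|+\varepsilon_{k+1}$, $b_{k+1}>0$. $\mathbf{H}_3$: (i) $a_k\ge\underline a>0$; (ii) $(b_k)\notin\ell^1$;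 (iii) $\sup_{k\ge1}\frac1{a_kb_k}<\infty$; (iv) $(\varepsilon_k)\in\ell^1$. *)

(* Defs.v *)
From Stdlib Require Import Reals Lra.
Open Scope R_scope.

Record Hilbert := {
  hcar :> Type;
  hzero : hcar;
  hadd : hcar -> hcar -> hcar;
  hopp : hcar -> hcar;
  hscal : R -> hcar -> hcar;
  hinner : hcar -> hcar -> R;
  hadd_assoc : forall x y z, hadd x (hadd y z) = hadd (hadd x y) z;
  hadd_comm : forall x y, hadd x y = hadd y x;
  hadd_zero : forall x, hadd x hzero = x;
  hadd_opp : forall x, hadd x (hopp x) = hzero;
  hscal_one : forall x, hscal 1 x = x;
  hscal_assoc : forall a b x, hscal a (hscal b x) = hscal (a * b) x;
  hscal_distr_l : forall a x y, hscal a (hadd x y) = hadd (hscal a x) (hscal a y);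
  hscal_distr_r : forall a b x, hscal (a + b) x = hadd (hscal a x) (hscal b x);
  hinner_sym : forall x y, hinner x y = hinner y x;
  hinner_add : forall x y z, hinner (hadd x y) z = hinner x z + hinner y z;
  hinner_scal : forall a x y, hinner (hscal a x) y = a * hinner x y;
  hinner_pos : forall x, 0 <= hinner x x;
  hinner_def : forall x, hinner x x = 0 -> x = hzero;
  hcomplete : forall u : nat -> hcar,
    (forall eps, 0 < eps -> exists N, forall m n, (N <= m)%nat -> (N <= n)%nat ->
        sqrt (hinner (hadd (u m) (hopp (u n))) (hadd (u m) (hopp (u n)))) < eps) ->
    exists l, forall eps, 0 < eps -> exists N, forall n, (N <= n)%nat ->
        sqrt (hinner (hadd (u n) (hopp l)) (hadd (u n) (hopp l))) < eps
}.

Section HilbertDefs.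
Context {H : Hilbert}.

Definition hsub (x y : H) : H := hadd H x (hopp H y).
Definition hnorm (x : H) : R := sqrt (hinner H x x).

Definition strong_cv (u : nat -> H) (l : H) : Prop :=
  forall eps, 0 < eps -> exists N, forall n, (N <= n)%nat -> hnorm (hsub (u n) l) < eps.

Definition weak_cv (u : nat -> H) (l : H) : Prop :=
  forall y : H, Un_cv (fun n => hinner H (u n) y) (hinner H l y).

End HilbertDefs.

Inductive Rbar := Fin (r : R) | PInf.

Definition Rbar_le (a b : Rbar) : Prop :=
  match a, b with
  | Fin x, Fin y => x <= y
  | _, PInf => True
  | PInf, Fin _ => False
  end.

Definition Rbar_lt (a b : Rbar) : Prop :=
  match a, b with
  | Fin x, Fin y => x < y
  | Fin _, PInf => True
  | PInf, _ => False
  end.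

Definition Rbar_scal (c : R) (a : Rbar) : Rbar :=
  match a with Fin x => Fin (c * x) | PInf => PInf end.

Definition Rbar_plus_R (a : Rbar) (c : R) : Rbar :=
  match a with Fin x => Fin (x + c) | PInf => PInf end.

Section FunDefs.
Context {H : Hilbert}.
Variable f : H -> Rbar.

Definition proper : Prop := exists x, f x <> PInf.

Definition lsc : Prop :=
  forall (x : H) (c : R), Rbar_lt (Fin c) (f x) ->
    exists delta, 0 < delta /\
      forall y, hnorm (hsub y x) < delta -> Rbar_lt (Fin c) (f y).

Definition f_cv (u : nat -> H) (x : H) : Prop :=
  strong_cv u x /\
  exists v, f x = Fin v /\
    forall eps, 0 < eps -> exists N, forall n, (N <= n)%nat ->
      exists w, f (u n) = Fin w /\ Rabs (w - v) < eps.

Definition frechet_subdiff (x p : H) : Prop :=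
  exists v, f x = Fin v /\
  forall eps, 0 < eps -> exists delta, 0 < delta /\
    forall y, hnorm (hsub y x) < delta ->
      Rbar_le (Fin (v + hinner H p (hsub y x) - eps * hnorm (hsub y x))) (f y).

Definition subdiff (x p : H) : Prop :=
  exists (u : nat -> H) (q : nat -> H),
    f_cv u x /\ (forall n, frechet_subdiff (u n) (q n)) /\ weak_cv q p.

(** lazy slope ||∂f(x)||_- = inf { ||p|| : p ∈ ∂f(x) }, +∞ if ∂f(x) = ∅;
    given as the (functional) relation  is_lazy_slope x s. *)
Definition is_glb (E : R -> Prop) (m : R) : Prop :=
  (forall y, E y -> m <= y) /\ (forall m', (forall y, E y -> m' <= y) -> m' <= m).

Definition is_lazy_slope (x : H) (s : Rbar) : Prop :=
  match s with
  | PInf => forall p, ~ subdiff x p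
  | Fin m => (exists p, subdiff x p) /\ is_glb (fun r => exists p, subdiff x p /\ r = hnorm p) m
  end.

End FunDefs.

Definition desingularizing (eta : R) (phi dphi : R -> R) : Prop :=
  0 < eta /\
  phi 0 = 0 /\
  (forall t, 0 <= t < eta -> 0 <= phi t) /\
  (forall t, 0 <= t < eta -> forall eps, 0 < eps -> exists d, 0 < d /\
     forall s, 0 <= s < eta -> Rabs (s - t) < d -> Rabs (phi s - phi t) < eps) /\
  (forall s t l, 0 <= s < eta -> 0 <= t < eta -> 0 <= l <= 1 ->
     l * phi s + (1 - l) * phi t <= phi (l * s + (1 - l) * t)) /\
  (forall t, 0 < t < eta -> derivable_pt_lim phi t (dphi t)) /\
  (forall t, 0 < t < eta -> forall eps, 0 < eps -> exists d, 0 < d /\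
     forall s, 0 < s < eta -> Rabs (s - t) < d -> Rabs (dphi s - dphi t) < eps) /\
  (forall t, 0 < t < eta -> 0 < dphi t).

Definition KL_at {H : Hilbert} (f : H -> Rbar) (xs : H) (eta : R) (phi dphi : R -> R) : Prop :=
  desingularizing eta phi dphi /\
  exists fs, f xs = Fin fs /\
  exists delta, 0 < delta /\
    forall x v, hnorm (hsub x xs) < delta -> f x = Fin v -> fs < v < fs + eta ->
      forall s, is_lazy_slope f x s -> Rbar_le (Fin 1) (Rbar_scal (dphi (v - fs)) s).

Definition phi_tilde (phi : R -> R) (t : R) : R := Rmax (phi t) (sqrt t).

(* Main.v *)
Require Import Defs.
From Stdlib Require Import Reals Lra Psatz Classical.
Open Scope R_scope.

Lemma hscal0 {H : Hilbert} (x : H) : hscal H 0 x = hzero H.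
Proof.
  assert (E : hscal H 0 x = hadd H (hscal H 0 x) (hscal H 0 x)).
  { rewrite <- hscal_distr_r. f_equal. ring. }
  set (s := hscal H 0 x) in *.
  transitivity (hadd H s (hadd H s (hopp H s))).
  - rewrite hadd_opp, hadd_zero. reflexivity.
  - rewrite hadd_assoc, <- E, hadd_opp. reflexivity.
Qed.

Lemma hinner0l {H : Hilbert} (y : H) : hinner H (hzero H) y = 0.
Proof. rewrite <- (hscal0 y), hinner_scal; ring. Qed.

Lemma hinner0r {H : Hilbert} (y : H) : hinner H y (hzero H) = 0.
Proof. rewrite hinner_sym; apply hinner0l. Qed.

Lemma hinner_add_r {H : Hilbert} (x y z : H) :
  hinner H x (hadd H y z) = hinner H x y + hinner H x z.
Proof. rewrite hinner_sym, hinner_add; f_equal; apply hinner_sym. Qed.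

Lemma hinner_scal_r {H : Hilbert} a (x y : H) :
  hinner H x (hscal H a y) = a * hinner H x y.
Proof. rewrite hinner_sym, hinner_scal; f_equal; apply hinner_sym. Qed.

Lemma hopp_unique {H : Hilbert} (u w : H) : hadd H u w = hzero H -> w = hopp H u.
Proof.
  intro E. transitivity (hadd H (hadd H (hopp H u) u) w).
  - rewrite (hadd_comm H (hopp H u) u), hadd_opp, hadd_comm, hadd_zero. reflexivity.
  - rewrite <- hadd_assoc, E, hadd_zero. reflexivity.
Qed.

Lemma hsub_trans {H : Hilbert} (a b c : H) : hadd H (hsub a b) (hsub b c) = hsub a c.
Proof.
  unfold hsub. rewrite <- hadd_assoc.
  rewrite (hadd_assoc H (hopp H b) b (hopp H c)).
  rewrite (hadd_comm H (hopp H b) b), hadd_opp.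
  rewrite (hadd_comm H (hzero H)), hadd_zero. reflexivity.
Qed.

Lemma hsub_sym_opp {H : Hilbert} (a b : H) : hsub b a = hopp H (hsub a b).
Proof. apply hopp_unique. rewrite hsub_trans. unfold hsub; apply hadd_opp. Qed.

Lemma hopp_scal {H : Hilbert} (u : H) : hopp H u = hscal H (-1) u.
Proof.
  symmetry; apply hopp_unique.
  rewrite <- (hscal_one H u) at 1. rewrite <- hscal_distr_r.
  replace (1 + -1) with 0 by ring. apply hscal0.
Qed.

Lemma hnorm_opp {H : Hilbert} (u : H) : hnorm (hopp H u) = hnorm u.
Proof.
  unfold hnorm. rewrite hopp_scal, hinner_scal, hinner_scal_r. f_equal; ring.
Qed.

Lemma hnorm_sym {H : Hilbert} (a b : H) : hnorm (hsub a b) = hnorm (hsub b a).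
Proof. rewrite (hsub_sym_opp a b), hnorm_opp. reflexivity. Qed.

Lemma hnorm_nonneg {H : Hilbert} (u : H) : 0 <= hnorm u.
Proof. apply sqrt_pos. Qed.

Lemma hexpand {H : Hilbert} (u w : H) t :
  hinner H (hadd H u (hscal H t w)) (hadd H u (hscal H t w)) =
  hinner H u u + 2*t*hinner H u w + t*t*hinner H w w.
Proof.
  rewrite hinner_add, !hinner_add_r, !hinner_scal, !hinner_scal_r, (hinner_sym H w u). ring.
Qed.

Lemma hCS {H : Hilbert} (u w : H) : hinner H u w <= hnorm u * hnorm w.
Proof.
  destruct (Req_dec (hinner H w w) 0) as [E|E].
  - apply hinner_def in E. subst w. rewrite hinner0r.
    apply Rmult_le_pos; apply sqrt_pos.
  - assert (Cp : 0 < hinner H w w) by (pose proof (hinner_pos H w); lra).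
    pose proof (hinner_pos H (hadd H u (hscal H (- hinner H u w / hinner H w w) w))) as P.
    rewrite hexpand in P.
    set (A := hinner H u u) in *. set (B := hinner H u w) in *. set (C := hinner H w w) in *.
    assert (X : A + 2 * (- B / C) * B + - B / C * (- B / C) * C = (A*C - B*B)/C)
      by (field; lra).
    rewrite X in P.
    assert (Q : 0 <= A*C - B*B).
    { replace (A*C - B*B) with ((A*C - B*B)/C * C) by (field; lra).
      apply Rmult_le_pos; lra. }
    unfold hnorm. fold A C.
    assert (A0 : 0 <= A) by apply hinner_pos.
    pose proof (sqrt_sqrt A A0). pose proof (sqrt_sqrt C (Rlt_le _ _ Cp)).
    pose proof (sqrt_pos A). pose proof (sqrt_pos C).
    destruct (Rle_lt_dec B (sqrt A * sqrt C)) as [h|h]; [exact h|].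
    exfalso. set (p := sqrt A * sqrt C) in *.
    assert (p0 : 0 <= p) by (apply Rmult_le_pos; lra).
    assert (pp : p * p = A * C) by (unfold p; nra).
    assert (B * B > p * p) by nra. lra.
Qed.

Lemma htri {H : Hilbert} (u w : H) : hnorm (hadd H u w) <= hnorm u + hnorm w.
Proof.
  pose proof (hCS u w) as Cs.
  unfold hnorm in *.
  rewrite hinner_add, !hinner_add_r, (hinner_sym H w u).
  pose proof (hinner_pos H u). pose proof (hinner_pos H w).
  pose proof (hinner_pos H (hadd H u w)) as P.
  rewrite hinner_add, !hinner_add_r, (hinner_sym H w u) in P.
  set (A := hinner H u u) in *. set (B := hinner H u w) in *. set (C := hinner H w w) in *.
  pose proof (sqrt_sqrt A ltac:(lra)). pose proof (sqrt_sqrt C ltac:(lra)).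
  pose proof (sqrt_sqrt (A + B + (B + C)) ltac:(lra)).
  pose proof (sqrt_pos A). pose proof (sqrt_pos C). pose proof (sqrt_pos (A + B + (B + C))).
  destruct (Rle_lt_dec (sqrt (A + B + (B + C))) (sqrt A + sqrt C)) as [h|h]; [exact h|].
  exfalso. set (r := sqrt (A + B + (B + C))) in *.
  assert (r * r > (sqrt A + sqrt C) * (sqrt A + sqrt C)) by nra.
  assert (sqrt A * sqrt C >= B) by lra. nra.
Qed.

Lemma htri_sub {H : Hilbert} (a b c : H) :
  hnorm (hsub a c) <= hnorm (hsub a b) + hnorm (hsub b c).
Proof. rewrite <- (hsub_trans a b c); apply htri. Qed.

Lemma tangent eta phi dphi : desingularizing eta phi dphi ->
  forall t s, 0 < t < eta -> 0 <= s < eta -> phi s <= phi t + dphi t * (s - t).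
Proof.
  intros [Heta [H0 [Hnn [Hc [Hconc [Hder _]]]]]] t s Ht Hs.
  destruct (Req_dec s t) as [->|Hst].
  { replace (t - t) with 0 by ring. lra. }
  apply Rnot_lt_le; intro Hlt.
  set (g := phi s - phi t - dphi t * (s - t)).
  assert (gp : 0 < g) by (unfold g; lra).
  assert (Habs: 0 < Rabs (s - t)) by (apply Rabs_pos_lt; lra).
  destruct (Hder t Ht (g / (2 * Rabs (s - t)))) as [dl Hdl].
  { apply Rdiv_lt_0_compat; lra. }
  pose proof (cond_pos dl) as dlp.
  set (lam := Rmin (1/2) (dl / (2 * Rabs (s - t)))).
  assert (lp : 0 < lam).
  { apply Rmin_glb_lt; [lra|]. apply Rdiv_lt_0_compat; lra. }
  assert (l1 : lam <= 1/2) by apply Rmin_l.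
  assert (l2 : lam <= dl / (2 * Rabs (s - t))) by apply Rmin_r.
  set (h := lam * (s - t)).
  assert (h0 : h <> 0).
  { unfold h. intro E. apply Rmult_integral in E. destruct E; lra. }
  assert (hl : lam * Rabs (s - t) <= dl / 2).
  { apply Rle_trans with (dl / (2 * Rabs (s - t)) * Rabs (s - t)).
    - apply Rmult_le_compat_r; lra.
    - right. field. lra. }
  assert (ha : Rabs h < dl).
  { unfold h. rewrite Rabs_mult, (Rabs_pos_eq lam) by lra. lra. }
  specialize (Hdl h h0 ha).
  pose proof (Hconc s t lam Hs ltac:(lra) ltac:(lra)) as Cc.
  replace (lam * s + (1 - lam) * t) with (t + h) in Cc by (unfold h; ring).
  set (q := (phi (t + h) - phi t) / h) in *.
  assert (Eq : phi (t + h) - phi t = q * h) by (unfold q; field; exact h0).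
  assert (E3 : phi s - phi t <= q * (s - t)).
  { apply (Rmult_le_reg_l lam); [lra|].
    assert (lam * (phi s - phi t) <= q * h) by lra.
    unfold h in *. lra. }
  assert (E1 : (q - dphi t) * (s - t) <= Rabs (q - dphi t) * Rabs (s - t)).
  { rewrite <- Rabs_mult. apply Rle_abs. }
  assert (E2 : Rabs (q - dphi t) * Rabs (s - t) < g / 2).
  { apply Rlt_le_trans with (g / (2 * Rabs (s - t)) * Rabs (s - t)).
    - apply Rmult_lt_compat_r; lra.
    - right. field. lra. }
  assert (q * (s - t) = dphi t * (s - t) + (q - dphi t) * (s - t)) by ring.
  unfold g in *. lra.
Qed.

Lemma slope_exists {H : Hilbert} (f : H -> Rbar) (y : H) :
  exists s, is_lazy_slope f y s.
Proof.
  destruct (classic (exists p, subdiff f y p)) as [[p Hp]|Hn].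
  - set (E := fun r => exists q, subdiff f y q /\ r = hnorm q).
    destruct (completeness (fun r => E (- r))) as [m [Hm1 Hm2]].
    + exists 0. intros r [q [_ Hq]]. pose proof (hnorm_nonneg q). lra.
    + exists (- hnorm p). exists p. split; [exact Hp|ring].
    + exists (Fin (- m)). simpl. split; [exists p; exact Hp|]. split.
      * intros r Hr. assert (E (- - r)) by (rewrite Ropp_involutive; exact Hr).
        pose proof (Hm1 (- r) H0). lra.
      * intros m' Hm'. assert (m <= - m'); [|lra].
        apply Hm2. intros r Hr. pose proof (Hm' _ Hr). lra.
  - exists PInf. simpl. intros p Hp. apply Hn. exists p; exact Hp.
Qed.

Theorem mainTheorem4 (H : Hilbert) (f : H -> Rbar)
  (x : nat -> H) (a b : nat -> R) (abar : R) (xs : H)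
  (eta : R) (phi dphi : R -> R) :
  proper f -> lsc f ->
  (* H1 *)
  (forall k, 0 < a k) ->
  (forall k, Rbar_le (Rbar_plus_R (f (x (S k))) (a k * (hnorm (hsub (x (S k)) (x k)))^2)) (f (x k))) ->
  (* H2 with eps_k = 0 *)
  (forall k, 0 < b (S k)) ->
  (forall k s, is_lazy_slope f (x (S k)) s ->
     Rbar_le (Rbar_scal (b (S k)) s) (Fin (hnorm (hsub (x (S k)) (x k))))) ->
  (* H3 *)
  0 < abar -> (forall k, abar <= a k) ->
  ~ (exists l, Un_cv (fun n => sum_f_R0 (fun i => Rabs (b i)) n) l) ->
  (exists M, forall k, (1 <= k)%nat -> / (a k * b k) <= M) ->
  (* f-convergence and KL property *)
  f_cv f x xs ->
  KL_at f xs eta phi dphi ->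
  exists C K, forall k, (K <= k)%nat -> (1 <= k)%nat ->
    exists v fs, f (x (k - 1)%nat) = Fin v /\ f xs = Fin fs /\
      hnorm (hsub xs (x k)) <= C * phi_tilde phi (v - fs).
Proof.
  intros _ _ Ha H1 Hb H2 Habar Habar_le _ [M HM] [Hstrong [v0 [Hv0 Hfconv]]] HKL.
  destruct HKL as [Hdes [fs [Hfs [delta [Hdelta HKL]]]]].
  pose proof Hdes as [Heta [Hphi0 [Hphinn _]]].
  pose proof (tangent _ _ _ Hdes) as Htan.
  rewrite Hfs in Hv0. injection Hv0 as <-.
  assert (Mp : 0 < M).
  { pose proof (HM 1%nat (le_n 1)). pose proof (Ha 1%nat). pose proof (Hb 0%nat).
    assert (0 < / (a 1%nat * b 1%nat)) by (apply Rinv_0_lt_compat; nra). lra. }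
  set (fv := fun k => match f (x k) with Fin r => r | PInf => 0 end).
  set (t := fun k => fv k - fs).
  set (d := fun k => hnorm (hsub (x (S k)) (x k))).
  assert (dnn : forall k, 0 <= d k) by (intro; apply hnorm_nonneg).
  destruct (Hfconv eta Heta) as [N1 HN1].
  destruct (Hstrong delta Hdelta) as [N2 HN2].
  assert (Fn : forall n, (N1 <= n)%nat -> f (x n) = Fin (fv n) /\ Rabs (t n) < eta).
  { intros n Hn. destruct (HN1 n Hn) as [w [Hw Hw2]]. unfold t, fv. rewrite Hw. auto. }
  assert (H1' : forall n, (N1 <= n)%nat -> fv (S n) + a n * d n ^ 2 <= fv n).
  { intros n Hn. pose proof (H1 n) as P.
    rewrite (proj1 (Fn n Hn)), (proj1 (Fn (S n) ltac:(lia))) in P. exact P. }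
  assert (mono : forall n, (N1 <= n)%nat -> fv (S n) <= fv n).
  { intros n Hn. pose proof (H1' n Hn). pose proof (Ha n). pose proof (dnn n). nra. }
  assert (tnn : forall n, (N1 <= n)%nat -> 0 <= t n).
  { intros n Hn. apply Rnot_lt_le. intro Hlt. unfold t in Hlt.
    assert (Hle : forall m, fv (m + n)%nat <= fv n).
    { induction m. simpl; lra. simpl. pose proof (mono (m + n)%nat ltac:(lia)). lra. }
    destruct (Hfconv (fs - fv n) ltac:(lra)) as [N HN].
    destruct (HN (N + n)%nat ltac:(lia)) as [w [Hw Hw2]].
    pose proof (Hle N). unfold fv in H0 at 1. rewrite Hw in H0.
    apply Rabs_def2 in Hw2. lra. }
  assert (tlt : forall n, (N1 <= n)%nat -> t n < eta).
  { intros n Hn. pose proof (proj2 (Fn n Hn)). apply Rabs_def2 in H0. lra. }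
  set (K0 := S (N1 + N2)).
  assert (Key : forall j, (K0 <= S j)%nat ->
     2 * d (S j) <= d j + M * (phi (t (S j)) - phi (t (S (S j))))).
  { intros j Hj. set (k := S j) in *.
    pose proof (tnn k ltac:(lia)) as tk0. pose proof (tnn (S k) ltac:(lia)) as tk1.
    pose proof (tlt k ltac:(lia)) as tk2. pose proof (tlt (S k) ltac:(lia)) as tk3.
    pose proof (H1' k ltac:(lia)) as Hk. pose proof (Ha k) as ak. pose proof (dnn k).
    pose proof (dnn j).
    assert (adk : 0 <= a k * d k ^ 2) by (apply Rmult_le_pos; [lra|apply pow2_ge_0]).
    destruct (Req_dec (t k) 0) as [E|E].
    - assert (Et : t (S k) = 0) by (unfold t in *; lra).
      rewrite E, Et. assert (d k = 0).
      { unfold t in *. assert (a k * d k ^ 2 <= 0) by (unfold t in *; lra). assert (d k * d k <= 0) by nra. apply Rle_antisym; nra. }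
      lra.
    - assert (tp : 0 < t k) by lra.
      destruct (slope_exists f (x k)) as [s Hs].
      pose proof (H2 j s Hs) as Hbs.
      destruct s as [m|]; [|simpl in Hbs; contradiction].
      simpl in Hbs.
      assert (m0 : 0 <= m).
      { destruct Hs as [_ [_ Hg]]. apply Hg. intros y [p [_ ->]]. apply hnorm_nonneg. }
      pose proof (HKL (x k) (fv k) (HN2 k ltac:(lia)) (proj1 (Fn k ltac:(lia)))
                  ltac:(unfold t in *; lra) (Fin m) Hs) as Hkl.
      simpl in Hkl. fold (t k) in Hkl.
      pose proof (Hdes) as [_ [_ [_ [_ [_ [_ [_ Hdp]]]]]]].
      pose proof (Hdp (t k) ltac:(lra)) as Dp.
      pose proof (Htan (t k) (t (S k)) ltac:(lra) ltac:(lra)) as Tg.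
      set (D := dphi (t k)) in *.
      set (Del := phi (t k) - phi (t (S k))).
      assert (h1 : D * (a k * d k ^ 2) <= Del).
      { unfold Del. assert (a k * d k ^ 2 <= t k - t (S k)) by (unfold t; lra).
        assert (D * (a k * d k ^ 2) <= D * (t k - t (S k))) by (apply Rmult_le_compat_l; lra).
        lra. }
      pose proof (Hb j) as bk. fold k in bk, Hbs.
      pose proof (HM k ltac:(lia)) as Mk.
      assert (abp : 0 < a k * b k) by nra.
      assert (M1 : 1 <= M * (a k * b k)).
      { apply (Rmult_le_compat_r (a k * b k)) in Mk; [|lra].
        rewrite Rinv_l in Mk by lra. lra. }
      assert (s1 : a k * b k * d k ^ 2 <= d j * Del).
      { assert (1 <= m * D) by (rewrite Rmult_comm; exact Hkl).
        assert (0 <= a k * b k * d k ^ 2) by (apply Rmult_le_pos; [lra|apply pow2_ge_0]).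
        assert (a k * b k * d k ^ 2 * 1 <= a k * b k * d k ^ 2 * (m * D))
          by (apply Rmult_le_compat_l; lra).
        assert (a k * b k * d k ^ 2 <= a k * b k * (m * D) * d k ^ 2) by lra.
        assert (a k * b k * (m * D) * d k ^ 2 = (b k * m) * (D * (a k * d k ^ 2))) by ring.
        assert ((b k * m) * (D * (a k * d k ^ 2)) <= d j * (D * (a k * d k ^ 2))).
        { apply Rmult_le_compat_r; [apply Rmult_le_pos; lra|]. idtac. exact Hbs. }
        assert (d j * (D * (a k * d k ^ 2)) <= d j * Del) by (apply Rmult_le_compat_l; lra).
        lra. }
      assert (s2 : d k ^ 2 <= M * (d j * Del)).
      { assert (d k ^ 2 <= M * (a k * b k) * d k ^ 2) by nra.
        assert (M * (a k * b k) * d k ^ 2 <= M * (d j * Del))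
          by (rewrite Rmult_assoc; apply Rmult_le_compat_l; lra).
        lra. }
      assert (Dn : 0 <= Del) by nra.
      assert (Q : 4 * (d k * d k) <= (d j + M * Del) * (d j + M * Del)).
      { pose proof (pow2_ge_0 (d j - M * Del)). simpl in s2. nra. }
      assert (Y : 0 <= d j + M * Del) by nra.
      change (2 * d k <= d j + M * Del).
      destruct (Rle_lt_dec (2 * d k) (d j + M * Del)) as [h|h]; [exact h|].
      assert ((d j + M * Del) * (d j + M * Del) < (2 * d k) * (2 * d k)) by nra. nra. }
  assert (Sum : forall j, (K0 <= S j)%nat -> forall n,
     hnorm (hsub (x (S (n + S j))) (x (S j))) + d (n + S j)%nat
       <= d j + M * (phi (t (S j)) - phi (t (S (n + S j))))).
  { intros j Hj n. induction n.
    - simpl. pose proof (Key j Hj). fold (d (S j)). lra.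
    - replace (S n + S j)%nat with (S (n + S j)) by lia.
      set (m := (n + S j)%nat) in *.
      pose proof (htri_sub (x (S (S m))) (x (S m)) (x (S j))).
      pose proof (Key m ltac:(lia)). fold (d (S m)) in H0. lra. }
  assert (Lim : forall j, (K0 <= S j)%nat -> hnorm (hsub xs (x (S j))) <= d j + M * phi (t (S j))).
  { intros j Hj. apply Rle_plus_epsilon. intros eps Heps.
    destruct (Hstrong eps Heps) as [N HN].
    set (m := S (N + S j)).
    pose proof (HN m ltac:(unfold m; lia)) as P. rewrite hnorm_sym in P.
    pose proof (htri_sub xs (x m) (x (S j))).
    pose proof (Sum j Hj N). fold m in H3.
    pose proof (dnn (N + S j)%nat).
    assert (0 <= phi (t m)) by (apply Hphinn; split; [apply tnn|apply tlt]; unfold m; lia).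
    nra. }
  exists (/ sqrt abar + M), (S K0). intros k Hk _.
  destruct k as [|j]; [lia|].
  replace (S j - 1)%nat with j by lia.
  exists (fv j), fs. split; [apply Fn; lia|]. split; [exact Hfs|].
  pose proof (Lim j ltac:(lia)) as L.
  pose proof (tnn j ltac:(lia)) as tj0. pose proof (tnn (S j) ltac:(lia)).
  pose proof (tlt j ltac:(lia)). pose proof (tlt (S j) ltac:(lia)).
  assert (Ph : phi (t (S j)) <= phi (t j)).
  { destruct (Req_dec (t j) 0) as [E|E].
    - assert (Etj : t (S j) = t j) by (pose proof (mono j ltac:(lia)); unfold t in *; lra).
      rewrite Etj; lra.
    - pose proof (Htan (t j) (t (S j)) ltac:(lra) ltac:(lra)).
      pose proof Hdes as [_ [_ [_ [_ [_ [_ [_ Hdp]]]]]]].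
      pose proof (Hdp (t j) ltac:(lra)).
      pose proof (mono j ltac:(lia)).
      assert (dphi (t j) * (t (S j) - t j) <= 0).
      { assert (t (S j) - t j <= 0) by (unfold t; lra). nra. }
      lra. }
  set (sa := sqrt abar).
  assert (sap : 0 < sa) by (apply sqrt_lt_R0; lra).
  assert (sa2 : sa * sa = abar) by (apply sqrt_sqrt; lra).
  set (r := sqrt (t j)).
  assert (r2 : r * r = t j) by (apply sqrt_sqrt; lra).
  assert (r0 : 0 <= r) by apply sqrt_pos.
  assert (Dj : d j * sa <= r).
  { pose proof (H1' j ltac:(lia)). pose proof (Habar_le j). pose proof (dnn j).
    assert (abar * d j ^ 2 <= t j) by (unfold t in *; nra).
    destruct (Rle_lt_dec (d j * sa) r) as [h|h]; [exact h|].
    assert (d j * sa * (d j * sa) > r * r) by nra. nra. }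
  assert (Dj' : d j <= / sa * r).
  { apply (Rmult_le_reg_l sa); [lra|]. rewrite <- Rmult_assoc, Rinv_r by lra. lra. }
  unfold phi_tilde. fold (t j). fold r.
  pose proof (Rmax_l (phi (t j)) r). pose proof (Rmax_r (phi (t j)) r).
  assert (0 < / sa) by (apply Rinv_0_lt_compat; lra).
  nra.
Qed.
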